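(* Let $0\le k\le n$, let $A=(a_{i,j})\in\mathbb{R}^{n\times n}$ be a Monge matrix and $B=(b_{i,j})\in\mathbb{R}^{n\times n}$ an Anti-Monge matrix, and consider RecovAP with $c_1(\{u_i,v_j\})=a_{i,j}$ and $c_2(\{u_i,v_j\})=b_{i,j}$. Let $m=\lfloor\frac{n-k}{2}\rfloor$ and $I=\{1,\dots,m\}\cup\{n+1-m,\dots,n\}$. Then there exists an optimal solution $M_1,M_2$ such that (1) $\{u_i,v_i\}\in M_1$ for all $i\in I$; (2) $\{u_i,v_{n+1-i}\}\in M_2$ for all $i\in I$; (3) $M_1\cap M_2$ is an optimal solution of the assignment problem with cost $c_1+c_2$ (i.e. a minimum-cost perfect matching with respect to $c_1+c_2$) on the complete bipartite subgraph induced by $\{u_i: m+1\le i\le n-m\}$ and $\{v_i: m+1\le i\le n-m\}$.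
   Context: $K_{n,n}$ has vertex classes $U=\{u_1,\dots,u_n\}$, $V=\{v_1,\dots,v_n\}$. RecovAP: given $c_1,c_2:E(K_{n,n})\to\mathbb{R}$ and an integer $k$, find perfect matchings $M_1,M_2$ of $K_{n,n}$ with $|M_1\cap M_2|\ge k$ minimizing $c_1(M_1)+c_2(M_2)$; an optimal solution is a minimizing feasible pair. A matrix $A$ is Monge if $a_{i,j}+a_{k,l}\le a_{i,l}+a_{k,j}$ for all $i<k$, $j<l$; a matrix $B$ is Anti-Monge if $b_{i,j}+b_{k,l}\ge b_{i,l}+b_{k,j}$ for all $i<k$, $j<l$. *)

(* Defs.v *)
(* Vertices u_i, v_j of K_{n,n} are indexed (0-based) by 'I_n;
   the edge {u_i, v_j} is the pair (i, j) : 'I_n * 'I_n. *)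
From mathcomp Require Import all_boot all_order all_algebra.
Set Implicit Arguments. Unset Strict Implicit. Unset Printing Implicit Defensive.
Import Order.TTheory GRing.Theory Num.Theory.
Local Open Scope ring_scope.

Definition monge (R : realFieldType) (n : nat) (A : 'M[R]_n) : Prop :=
  forall i k j l : 'I_n, (i < k)%N -> (j < l)%N -> A i j + A k l <= A i l + A k j.
Definition anti_monge (R : realFieldType) (n : nat) (B : 'M[R]_n) : Prop :=
  forall i k j l : 'I_n, (i < k)%N -> (j < l)%N -> B i j + B k l >= B i l + B k j.

Definition is_pm (n : nat) (S : {set 'I_n}) (M : {set 'I_n * 'I_n}) : Prop :=
  M \subset setX S S /\
  (forall i, i \in S -> #|[set j | (i, j) \in M]| = 1%N) /\
  (forall j, j \in S -> #|[set i | (i, j) \in M]| = 1%N).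

Definition perfect_matching (n : nat) (M : {set 'I_n * 'I_n}) : Prop :=
  is_pm [set: 'I_n] M.

Definition mcost (R : realFieldType) (n : nat) (C : 'M[R]_n) (M : {set 'I_n * 'I_n}) : R :=
  \sum_(e in M) C e.1 e.2.

Definition recov_feasible (n k : nat) (M1 M2 : {set 'I_n * 'I_n}) : Prop :=
  perfect_matching M1 /\ perfect_matching M2 /\ (k <= #|M1 :&: M2|)%N.

Definition recov_optimal (R : realFieldType) (n : nat) (c1 c2 : 'M[R]_n) (k : nat)
    (M1 M2 : {set 'I_n * 'I_n}) : Prop :=
  recov_feasible k M1 M2 /\
  forall N1 N2, recov_feasible k N1 N2 ->
    mcost c1 M1 + mcost c2 M2 <= mcost c1 N1 + mcost c2 N2.

Definition opt_assignment (R : realFieldType) (n : nat) (C : 'M[R]_n)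
    (S : {set 'I_n}) (M : {set 'I_n * 'I_n}) : Prop :=
  is_pm S M /\ forall M', is_pm S M' -> mcost C M <= mcost C M'.

(* Main.v *)
Require Import Defs.
From mathcomp Require Import all_boot all_order all_algebra all_fingroup zify ring lra.
Set Implicit Arguments. Unset Strict Implicit. Unset Printing Implicit Defensive.
Import Order.TTheory GRing.Theory Num.Theory.
Local Open Scope ring_scope.

Lemma big_upd (V : Type) (idx : V) (op : Monoid.com_law idx) (T : finType)
  (F G : T -> V) (s : seq T) :
  uniq s -> (forall i, i \notin s -> G i = F i) ->
  op (\big[op/idx]_i G i) (\big[op/idx]_(i <- s) F i) =
  op (\big[op/idx]_i F i) (\big[op/idx]_(i <- s) G i).
Proof.
move=> us H; rewrite (big_uniq _ (F:=F) us) (big_uniq _ (F:=G) us).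
have e1 := bigID (mem s) predT G; have e2 := bigID (mem s) predT F.
rewrite /= in e1 e2; rewrite e1 e2.
have -> : \big[op/idx]_(i | i \notin s) G i = \big[op/idx]_(i | i \notin s) F i.
  by apply: eq_bigr => i /H.
set a := \big[op/idx]_(i in s) G i; set b := \big[op/idx]_(i | i \notin s) F i.
set c := \big[op/idx]_(i in s) F i.
rewrite -!Monoid.mulmA.
by rewrite [_ b c]SemiGroup.mulmC [_ b a]SemiGroup.mulmC !SemiGroup.mulmA [_ a c]SemiGroup.mulmC.
Qed.

Definition swp (T : finType) (u v : T) (p : {perm T}) : {perm T} := (tperm u v * p)%g.
Definition cyc (T : finType) (u v w : T) (p : {perm T}) : {perm T} :=
  (tperm u v * tperm v w * p)%g.

Lemma swpE (T : finType) (u v : T) p :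
  [/\ swp u v p u = p v, swp u v p v = p u &
     forall i, i \notin [:: u; v] -> swp u v p i = p i].
Proof.
rewrite /swp !permM tpermL tpermR; split => // i.
by rewrite !inE negb_or => /andP[iu iv]; rewrite permM tpermD // eq_sym.
Qed.

Lemma cycE (T : finType) (u v w : T) p : uniq [:: u; v; w] ->
  [/\ cyc u v w p u = p w, cyc u v w p v = p u, cyc u v w p w = p v &
     forall i, i \notin [:: u; v; w] -> cyc u v w p i = p i].
Proof.
rewrite /= !inE negb_or andbT => /andP[/andP[uv uw] vw].
rewrite /cyc; split.
- by rewrite !permM tpermL tpermL.
- by rewrite !permM tpermR tpermD // eq_sym.
- by rewrite !permM (tpermD uw vw) tpermR.
move=> i; rewrite !inE !negb_or => /and3P[iu iv iw].
by rewrite !permM !tpermD // eq_sym.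
Qed.

Section Main.
Variables (R : realFieldType) (n k : nat) (A B : 'M[R]_n).
Hypotheses (hA : monge A) (hB : anti_monge B).

Definition inW r (i : 'I_n) : bool := (r <= i)%N && (i < n - r)%N.
Definition struct r (p q : {perm 'I_n}) :=
  forall i, ~~ inW r i -> p i = i /\ q i = rev_ord i.
Definition cost (p q : {perm 'I_n}) : R := \sum_i (A i (p i) + B i (q i)).
Definition comm (p q : {perm 'I_n}) : nat := (\sum_i ((p i == q i) : nat))%N.
Definition phi (p q : {perm 'I_n}) : nat :=
  (\sum_(i : 'I_n) (nat_of_ord i * p i + nat_of_ord i * rev_ord (q i)))%N.

Definition agree (s : seq 'I_n) (p q p' q' : {perm 'I_n}) :=
  forall i, i \notin s -> p' i = p i /\ q' i = q i.

Lemma costU s p q p' q' : uniq s -> agree s p q p' q' ->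
  cost p' q' + \sum_(i <- s) (A i (p i) + B i (q i)) =
  cost p q + \sum_(i <- s) (A i (p' i) + B i (q' i)).
Proof.
move=> us ag; apply: big_upd => // i /ag[-> ->] //.
Qed.

Lemma commU s p q p' q' : uniq s -> agree s p q p' q' ->
  (comm p' q' + \sum_(i <- s) ((p i == q i) : nat) =
  comm p q + \sum_(i <- s) ((p' i == q' i) : nat))%N.
Proof.
move=> us ag; apply: big_upd => // i /ag[-> ->] //.
Qed.

Lemma phiU s p q p' q' : uniq s -> agree s p q p' q' ->
  (phi p' q' + \sum_(i <- s) (nat_of_ord i * p i + nat_of_ord i * rev_ord (q i)) =
  phi p q + \sum_(i <- s) (nat_of_ord i * p' i + nat_of_ord i * rev_ord (q' i)))%N.
Proof.
move=> us ag; apply: big_upd => // i /ag[-> ->] //.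
Qed.

Lemma struct_agree r s p q p' q' : struct r p q -> all (inW r) s ->
  agree s p q p' q' -> struct r p' q'.
Proof.
move=> st al ag i ni.
have : i \notin s by apply/negP => /(allP al); rewrite (negbTE ni).
by move/ag => [-> ->]; apply: st.
Qed.

Lemma inW_rev r i : inW r (rev_ord i) = inW r i.
Proof.
rewrite /inW /=; have := ltn_ord i; move: (nat_of_ord i) => m hm.
by apply/idP/idP => /andP[h1 h2]; apply/andP; split; lia.
Qed.

Lemma winP r p q i : struct r p q -> inW r i -> inW r (p i).
Proof.
move=> st wi; apply/negPn/negP => npi.
have [e _] := st _ npi; move/perm_inj: e => e.
by move: wi; rewrite -{1}e (negbTE npi).
Qed.

Lemma winQ r p q i : struct r p q -> inW r i -> inW r (q i).
Proof.
move=> st wi; apply/negPn/negP => nqi.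
have : ~~ inW r (rev_ord (q i)) by rewrite inW_rev.
move/st => [_ e]; rewrite rev_ordK in e; move/perm_inj: e => e.
by move: wi; rewrite -{1}e inW_rev (negbTE nqi).
Qed.


Lemma ordeq (a b : 'I_n) : (a == b) = (nat_of_ord a == nat_of_ord b). Proof. by []. Qed.

Definition Inv r (a b x y : 'I_n) (p q : {perm 'I_n}) :=
  [/\ (a < b)%N, (x < y)%N, inW r a && inW r b, inW r x && inW r y &
   [/\ p a = x, p b = y, q a = y, q b = x &
    forall i, inW r i -> p i != q i ->
      [&& (a <= i <= b)%N, (x <= p i <= y)%N & (x <= q i <= y)%N]]].

Ltac clean := repeat match goal with
 | H : is_true (inW _ _) |- _ => clear H
 | H : is_true (uniq _) |- _ => clear H
 | H : is_true (all _ _) |- _ => clear H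
 | H : is_true (_ \notin _) |- _ => clear H
 | H : Inv _ _ _ _ _ _ _ |- _ => clear H
 | H : struct _ _ _ |- _ => clear H
 | H : agree _ _ _ _ _ |- _ => clear H
 | H : forall _, _ |- _ => clear H
 | H : is_true (~~ _) |- _ => clear H
 | H : monge _ |- _ => clear H
 | H : anti_monge _ |- _ => clear H
 end.
Ltac nlia := clean; lia.

Lemma Inv_move r (a b x y a' b' x' y' : 'I_n) (p q p' q' : {perm 'I_n}) s :
 Inv r a b x y p q -> agree s p q p' q' ->
 (a' <= a)%N -> (b <= b')%N -> (x' <= x)%N -> (y <= y')%N ->
 (a' < b')%N -> (x' < y')%N -> inW r a' && inW r b' -> inW r x' && inW r y' ->
 p' a' = x' -> p' b' = y' -> q' a' = y' -> q' b' = x' ->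
 (forall i, i \in s -> inW r i -> p' i != q' i ->
   [&& (a' <= i <= b')%N, (x' <= p' i <= y')%N & (x' <= q' i <= y')%N]) ->
 Inv r a' b' x' y' p' q'.
Proof.
case=> _ _ _ _ [_ _ _ _ H] ag h1 h2 h3 h4 l1 l2 w1 w2 e1 e2 e3 e4 Hs.
split => //; split => // i wi.
case: (boolP (i \in s)) => [/Hs|/ag [-> ->]]; first exact.
move=> /(H _ wi); lia.
Qed.

Definition Post r (a b x y : 'I_n) (p q : {perm 'I_n}) (a' b' x' y' : 'I_n) (p' q' : {perm 'I_n}) :=
  [/\ struct r p' q', Inv r a' b' x' y' p' q', comm p' q' = comm p q,
      cost p' q' <= cost p q &
      [/\ (a' <= a)%N, (b <= b')%N, (x' <= x)%N & (y <= y')%N]].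

Lemma Post_refl r (a b x y : 'I_n) (p q : {perm 'I_n}) : struct r p q -> Inv r a b x y p q ->
  Post r a b x y p q a b x y p q.
Proof. by move=> st iv; split => //; split. Qed.

Lemma ins_s0 r (a b x y : 'I_n) (p q : {perm 'I_n}) : struct r p q -> Inv r a b x y p q ->
  exists p' q' a' b' x' y', Post r a b x y p q a' b' x' y' p' q' /\ a' = r :> nat.
Proof.
move=> st iv; have iv' := iv.
case: iv' => ab xy /andP[wa wb] /andP[wx wy] [pa pb qa qb H].
case: (ltnP r a) => ra; last first.
  exists p, q, a, b, x, y; split; first exact: Post_refl.
  by move: wa; rewrite /inW; nlia.
have rn : (r < n)%N by move: wa; rewrite /inW; nlia.
have [lo vlo] : {lo : 'I_n | nat_of_ord lo = r} := exist _ (Ordinal rn) erefl.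
have wlo : inW r lo by move: wa; rewrite /inW vlo; nlia.
have plo : p lo = q lo.
  apply/eqP; apply: contraT => ne; have := H _ wlo ne.
  by move: ra; rewrite vlo; nlia.
have wj : inW r (p lo) := winP st wlo.
have loa : (nat_of_ord lo < a)%N by rewrite vlo.
have lob : (nat_of_ord lo < b)%N by lia.
have jx : nat_of_ord (p lo) != x.
  rewrite -pa -ordeq; apply/eqP => /perm_inj e; move: loa; rewrite e; nlia.
have jy : nat_of_ord (p lo) != y.
  rewrite -qa plo -ordeq; apply/eqP => /perm_inj e; move: loa; rewrite e; nlia.
have hlo : forall i : 'I_n, i \in [:: lo; a] -> i = lo \/ i = a.
  by move=> i; rewrite !inE => /orP[/eqP|/eqP]; [left|right].
have hlo3 : forall i : 'I_n, i \in [:: lo; b; a] -> [\/ i = lo, i = b | i = a].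
  by move=> i; rewrite !inE => /or3P[/eqP|/eqP|/eqP]; [constructor 1|constructor 2|constructor 3].
have u2 : uniq [:: lo; a] by rewrite /= inE ordeq; nlia.
have u3 : uniq [:: lo; b; a] by rewrite /= !inE !ordeq; nlia.
have bn2 : b \notin [:: lo; a] by rewrite !inE !ordeq; nlia.
have w2 : all (inW r) [:: lo; a] by rewrite /= wlo wa.
have w3 : all (inW r) [:: lo; b; a] by rewrite /= wlo wa wb.
case: (ltngtP (p lo) x) => [jltx | xltj | ]; last by move/eqP; rewrite (negbTE jx).
-
  pose q' := cyc lo b a q.
  have [Q1 Q2 Q3 Q4] := cycE q u3.
  have ag : agree [:: lo; b; a] p q p q' by move=> i /Q4 ->.
  exists p, q', lo, b, (p lo), y; split; last by [].
  split.
  + exact: struct_agree st w3 ag.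
  + apply: (Inv_move iv ag) => //; try nlia; try by rewrite ?P1 ?P2 ?P3 ?Q1 ?Q2 ?Q3 ?pa ?pb ?qa ?qb -?plo ?wlo ?wa ?wb ?wx ?wy ?wj.
    move=> i /hlo3 [->|->|->] _; rewrite ?Q1 ?Q2 ?Q3 ?qa ?qb -?plo ?pa ?pb ?eqxx ?ordeq /=; nlia.
  + have := commU u3 ag; rewrite !big_cons !big_nil Q1 Q2 Q3 pa pb qa qb -plo ?eqxx ?ordeq; nlia.
  + have := costU u3 ag; rewrite !big_cons !big_nil Q1 Q2 Q3 pa pb qa qb -plo.
    have h1 := hB (i:=lo) (k:=a) (j:=p lo) (l:=y) loa (ltn_trans jltx xy).
    have h2 := hB (i:=a) (k:=b) (j:=p lo) (l:=x) ab jltx.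
    lra.
  + split => //; nlia.
case: (ltngtP (p lo) y) => [jlty | yltj | ]; last by move/eqP; rewrite (negbTE jy).
-
  pose p' := swp lo a p; pose q' := swp lo a q.
  have [P1 P2 P3] := swpE lo a p; have [Q1 Q2 Q3] := swpE lo a q.
  have ag : agree [:: lo; a] p q p' q' by move=> i hi; rewrite P3 // Q3.
  exists p', q', lo, b, x, y; split; last by [].
  split.
  + exact: struct_agree st w2 ag.
  + apply: (Inv_move iv ag) => //; try nlia; try by rewrite ?P1 ?P2 ?P3 ?Q1 ?Q2 ?Q3 ?pa ?pb ?qa ?qb -?plo ?wlo ?wa ?wb ?wx ?wy ?wj.
    move=> i /hlo [->|->] _; rewrite ?P1 ?P2 ?Q1 ?Q2 ?qa ?pa -?plo ?eqxx ?ordeq /=; nlia.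
  + have := commU u2 ag; rewrite !big_cons !big_nil P1 P2 Q1 Q2 pa qa -plo ?eqxx ?ordeq; nlia.
  + have := costU u2 ag; rewrite !big_cons !big_nil P1 P2 Q1 Q2 pa qa -plo.
    have h1 := hA (i:=lo) (k:=a) (j:=x) (l:=p lo) loa xltj.
    have h2 := hB (i:=lo) (k:=a) (j:=p lo) (l:=y) loa jlty.
    lra.
  + split => //; nlia.
-
  pose p' := cyc lo b a p.
  have [P1 P2 P3 P4] := cycE p u3.
  have ag : agree [:: lo; b; a] p q p' q by move=> i /P4 ->.
  exists p', q, lo, b, x, (p lo); split; last by [].
  split.
  + exact: struct_agree st w3 ag.
  + apply: (Inv_move iv ag) => //; try nlia; try by rewrite ?P1 ?P2 ?P3 ?Q1 ?Q2 ?Q3 ?pa ?pb ?qa ?qb -?plo ?wlo ?wa ?wb ?wx ?wy ?wj.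
    move=> i /hlo3 [->|->|->] _; rewrite ?P1 ?P2 ?P3 ?qa ?qb -?plo ?pa ?pb ?eqxx ?ordeq /=; nlia.
  + have := commU u3 ag; rewrite !big_cons !big_nil P1 P2 P3 pa pb qa qb -plo ?eqxx ?ordeq; nlia.
  + have := costU u3 ag; rewrite !big_cons !big_nil P1 P2 P3 pa pb qa qb -plo.
    have h1 := hA (i:=lo) (k:=a) (j:=x) (l:=p lo) loa (ltn_trans xy yltj).
    have h2 := hA (i:=a) (k:=b) (j:=y) (l:=p lo) ab yltj.
    lra.
  + split => //; nlia.
Qed.


Lemma ins_s1 r (a b x y : 'I_n) (p q : {perm 'I_n}) : struct r p q -> Inv r a b x y p q ->
  exists p' q' a' b' x' y', Post r a b x y p q a' b' x' y' p' q' /\ b' = (n - r.+1)%N :> nat.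
Proof.
move=> st iv; have iv' := iv.
case: iv' => ab xy /andP[wa wb] /andP[wx wy] [pa pb qa qb H].
case: (ltnP b (n - r.+1)) => ra; last first.
  exists p, q, a, b, x, y; split; first exact: Post_refl.
  by move: wb; rewrite /inW; nlia.
have rn : (r < n)%N by move: wa; rewrite /inW; nlia.
have [lo vlo] : {lo : 'I_n | nat_of_ord lo = (n - r.+1)%N} :=
  exist _ (rev_ord (Ordinal rn)) erefl.
have wlo : inW r lo by move: wa; rewrite /inW vlo; nlia.
have plo : p lo = q lo.
  apply/eqP; apply: contraT => ne; have := H _ wlo ne.
  by move: ra; rewrite vlo; nlia.
have wj : inW r (p lo) := winP st wlo.
have loa : (a < nat_of_ord lo)%N by rewrite vlo; nlia.
have lob : (b < nat_of_ord lo)%N by rewrite vlo.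
have jx : nat_of_ord (p lo) != x.
  rewrite -qb plo -ordeq; apply/eqP => /perm_inj e; move: lob; rewrite e; nlia.
have jy : nat_of_ord (p lo) != y.
  rewrite -pb -ordeq; apply/eqP => /perm_inj e; move: lob; rewrite e; nlia.
have hlo : forall i : 'I_n, i \in [:: lo; b] -> i = lo \/ i = b.
  by move=> i; rewrite !inE => /orP[/eqP|/eqP]; [left|right].
have hlo3 : forall i : 'I_n, i \in [:: lo; a; b] -> [\/ i = lo, i = a | i = b].
  by move=> i; rewrite !inE => /or3P[/eqP|/eqP|/eqP]; [constructor 1|constructor 2|constructor 3].
have u2 : uniq [:: lo; b] by rewrite /= inE ordeq; nlia.
have u3 : uniq [:: lo; a; b] by rewrite /= !inE !ordeq; nlia.
have an2 : a \notin [:: lo; b] by rewrite !inE !ordeq; nlia.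
have w2 : all (inW r) [:: lo; b] by rewrite /= wlo wb.
have w3 : all (inW r) [:: lo; a; b] by rewrite /= wlo wa wb.
case: (ltngtP (p lo) x) => [jltx | xltj | ]; last by move/eqP; rewrite (negbTE jx).
-
  pose p' := cyc lo a b p.
  have [P1 P2 P3 P4] := cycE p u3.
  have ag : agree [:: lo; a; b] p q p' q by move=> i /P4 ->.
  exists p', q, a, lo, (p lo), y; split; last by [].
  split.
  + exact: struct_agree st w3 ag.
  + apply: (Inv_move iv ag) => //; try nlia; try by rewrite ?P1 ?P2 ?P3 ?pa ?pb ?qa ?qb -?plo ?wlo ?wa ?wb ?wx ?wy ?wj.
    move=> i /hlo3 [->|->|->] _; rewrite ?P1 ?P2 ?P3 ?qa ?qb -?plo ?pa ?pb ?eqxx ?ordeq /=; nlia.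
  + have := commU u3 ag; rewrite !big_cons !big_nil P1 P2 P3 pa pb qa qb -plo ?eqxx ?ordeq; nlia.
  + have := costU u3 ag; rewrite !big_cons !big_nil P1 P2 P3 pa pb qa qb -plo.
    have h1 := hA (i:=a) (k:=b) (j:=p lo) (l:=x) ab jltx.
    have h2 := hA (i:=b) (k:=lo) (j:=p lo) (l:=y) lob (ltn_trans jltx xy).
    lra.
  + split => //; nlia.
case: (ltngtP (p lo) y) => [jlty | yltj | ]; last by move/eqP; rewrite (negbTE jy).
-
  pose p' := swp lo b p; pose q' := swp lo b q.
  have [P1 P2 P3] := swpE lo b p; have [Q1 Q2 Q3] := swpE lo b q.
  have ag : agree [:: lo; b] p q p' q' by move=> i hi; rewrite P3 // Q3.
  exists p', q', a, lo, x, y; split; last by [].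
  split.
  + exact: struct_agree st w2 ag.
  + apply: (Inv_move iv ag) => //; try nlia; try by rewrite ?P1 ?P2 ?P3 ?Q1 ?Q2 ?Q3 ?pa ?pb ?qa ?qb -?plo ?wlo ?wa ?wb ?wx ?wy ?wj.
    move=> i /hlo [->|->] _; rewrite ?P1 ?P2 ?Q1 ?Q2 ?qb ?pb -?plo ?eqxx ?ordeq /=; nlia.
  + have := commU u2 ag; rewrite !big_cons !big_nil P1 P2 Q1 Q2 pb qb -plo ?eqxx ?ordeq; nlia.
  + have := costU u2 ag; rewrite !big_cons !big_nil P1 P2 Q1 Q2 pb qb -plo.
    have h1 := hA (i:=b) (k:=lo) (j:=p lo) (l:=y) lob jlty.
    have h2 := hB (i:=b) (k:=lo) (j:=x) (l:=p lo) lob xltj.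
    lra.
  + split => //; nlia.
-
  pose q' := cyc lo a b q.
  have [Q1 Q2 Q3 Q4] := cycE q u3.
  have ag : agree [:: lo; a; b] p q p q' by move=> i /Q4 ->.
  exists p, q', a, lo, x, (p lo); split; last by [].
  split.
  + exact: struct_agree st w3 ag.
  + apply: (Inv_move iv ag) => //; try nlia; try by rewrite ?Q1 ?Q2 ?Q3 ?pa ?pb ?qa ?qb -?plo ?wlo ?wa ?wb ?wx ?wy ?wj.
    move=> i /hlo3 [->|->|->] _; rewrite ?Q1 ?Q2 ?Q3 ?qa ?qb -?plo ?pa ?pb ?eqxx ?ordeq /=; nlia.
  + have := commU u3 ag; rewrite !big_cons !big_nil Q1 Q2 Q3 pa pb qa qb -plo ?eqxx ?ordeq; nlia.
  + have := costU u3 ag; rewrite !big_cons !big_nil Q1 Q2 Q3 pa pb qa qb -plo.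
    have h1 := hB (i:=a) (k:=b) (j:=y) (l:=p lo) ab yltj.
    have h2 := hB (i:=b) (k:=lo) (j:=x) (l:=p lo) lob (ltn_trans xy yltj).
    lra.
  + split => //; nlia.
Qed.


Lemma ins_t0 r (a b x y : 'I_n) (p q : {perm 'I_n}) : struct r p q -> Inv r a b x y p q ->
  exists p' q' a' b' x' y', Post r a b x y p q a' b' x' y' p' q' /\ x' = r :> nat.
Proof.
move=> st iv; have iv' := iv.
case: iv' => ab xy /andP[wa wb] /andP[wx wy] [pa pb qa qb H].
case: (ltnP r x) => ra; last first.
  exists p, q, a, b, x, y; split; first exact: Post_refl.
  by move: wx; rewrite /inW; nlia.
have rn : (r < n)%N by move: wa; rewrite /inW; nlia.
have [lo vj] : {lo : 'I_n | nat_of_ord (p lo) = r} :=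
  exist _ ((p^-1)%g (Ordinal rn)) (congr1 val (permKV p (Ordinal rn))).
have wj : inW r (p lo) by move: wx; rewrite /inW vj; nlia.
have wlo : inW r lo.
  apply/negPn/negP => nw; have [e _] := st _ nw.
  by move: wj; rewrite e (negbTE nw).
have plo : p lo = q lo.
  apply/eqP; apply: contraT => ne; have := H _ wlo ne.
  by move: ra; rewrite vj; nlia.
have [j jdef] : {j : 'I_n | p lo = j} := exist _ (p lo) erefl.
rewrite jdef in vj wj.
have jltx : (j < x)%N by rewrite vj.
have jlty : (j < y)%N by nlia.
case: (ltngtP lo a) => [loa | alo | /val_inj e]; last (by move: jltx; rewrite -jdef e pa; nlia).
-
  have u3 : uniq [:: lo; b; a] by rewrite /= !inE !ordeq; nlia.
  have w3 : all (inW r) [:: lo; b; a] by rewrite /= wlo wa wb.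
  have hlo3 : forall i : 'I_n, i \in [:: lo; b; a] -> [\/ i = lo, i = b | i = a].
    by move=> i; rewrite !inE => /or3P[/eqP|/eqP|/eqP]; [constructor 1|constructor 2|constructor 3].
  pose q' := cyc lo b a q.
  have [Q1 Q2 Q3 Q4] := cycE q u3.
  have ag : agree [:: lo; b; a] p q p q' by move=> i /Q4 ->.
  exists p, q', lo, b, j, y; split; last by [].
  split.
  + exact: struct_agree st w3 ag.
  + apply: (Inv_move iv ag) => //; try nlia; try by rewrite ?Q1 ?Q2 ?Q3 ?pa ?pb ?qa ?qb -?plo ?jdef ?wlo ?wa ?wb ?wx ?wy ?wj.
    move=> i /hlo3 [->|->|->] _; rewrite ?Q1 ?Q2 ?Q3 ?qa ?qb -?plo ?jdef ?pa ?pb ?eqxx ?ordeq /=; nlia.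
  + have := commU u3 ag; rewrite !big_cons !big_nil Q1 Q2 Q3 pa pb qa qb -plo ?jdef ?eqxx ?ordeq; nlia.
  + have := costU u3 ag; rewrite !big_cons !big_nil Q1 Q2 Q3 pa pb qa qb -plo ?jdef.
    have h1 := hB (i:=lo) (k:=a) (j:=j) (l:=y) loa jlty.
    have h2 := hB (i:=a) (k:=b) (j:=j) (l:=x) ab jltx.
    lra.
  + split => //; nlia.
case: (ltngtP lo b) => [lob | blo | /val_inj e]; last (by move: jlty; rewrite -jdef e pb; nlia).
-
  have u3 : uniq [:: a; lo; b] by rewrite /= !inE !ordeq; nlia.
  have w3 : all (inW r) [:: a; lo; b] by rewrite /= wlo wa wb.
  have bn : b \notin [:: a; lo] by rewrite !inE !ordeq; nlia.
  have an : a \notin [:: lo; b] by rewrite !inE !ordeq; nlia.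
  have hlo3 : forall i : 'I_n, i \in [:: a; lo; b] -> [\/ i = a, i = lo | i = b].
    by move=> i; rewrite !inE => /or3P[/eqP|/eqP|/eqP]; [constructor 1|constructor 2|constructor 3].
  pose p' := swp a lo p; pose q' := swp lo b q.
  have [P1 P2 P3] := swpE a lo p; have [Q1 Q2 Q3] := swpE lo b q.
  have ag : agree [:: a; lo; b] p q p' q'.
    move=> i; rewrite !inE !negb_or => /and3P[h1 h2 h3].
    by rewrite P3 ?Q3 // !inE negb_or ?h1 ?h2 ?h3.
  exists p', q', a, b, j, y; split; last by [].
  split.
  + exact: struct_agree st w3 ag.
  + apply: (Inv_move iv ag) => //; try nlia; try by rewrite ?P1 ?P2 ?(P3 _ bn) ?Q1 ?Q2 ?(Q3 _ an) ?pa ?pb ?qa ?qb -?plo ?jdef ?wj ?wx ?wy ?wa ?wb.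
    move=> i /hlo3 [->|->|->] _.
    * by rewrite P1 (Q3 _ an) qa ?jdef ?ordeq; nlia.
    * by rewrite P2 Q1 pa qb eqxx.
    * by rewrite (P3 _ bn) Q2 pb -plo ?jdef ?ordeq; nlia.
  + have := commU u3 ag; rewrite !big_cons !big_nil P1 P2 (P3 _ bn) Q1 Q2 (Q3 _ an) pa pb qa qb -plo ?jdef ?eqxx ?ordeq; nlia.
  + have := costU u3 ag; rewrite !big_cons !big_nil P1 P2 (P3 _ bn) Q1 Q2 (Q3 _ an) pa pb qa qb -plo ?jdef.
    have h1 := hA (i:=a) (k:=lo) (j:=j) (l:=x) alo jltx.
    have h2 := hB (i:=lo) (k:=b) (j:=j) (l:=x) lob jltx.
    lra.
  + split => //; nlia.
-
  have u3 : uniq [:: a; b; lo] by rewrite /= !inE !ordeq; nlia.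
  have w3 : all (inW r) [:: a; b; lo] by rewrite /= wlo wa wb.
  have hlo3 : forall i : 'I_n, i \in [:: a; b; lo] -> [\/ i = a, i = b | i = lo].
    by move=> i; rewrite !inE => /or3P[/eqP|/eqP|/eqP]; [constructor 1|constructor 2|constructor 3].
  pose p' := cyc a b lo p.
  have [P1 P2 P3 P4] := cycE p u3.
  have ag : agree [:: a; b; lo] p q p' q by move=> i /P4 ->.
  exists p', q, a, lo, j, y; split; last by [].
  split.
  + exact: struct_agree st w3 ag.
  + apply: (Inv_move iv ag) => //; try nlia; try by rewrite ?P1 ?P2 ?P3 ?pa ?pb ?qa ?qb -?plo ?jdef ?wlo ?wa ?wb ?wx ?wy ?wj.
    move=> i /hlo3 [->|->|->] _; rewrite ?P1 ?P2 ?P3 ?qa ?qb -?plo ?jdef ?pa ?pb ?eqxx ?ordeq /=; nlia.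
  + have := commU u3 ag; rewrite !big_cons !big_nil P1 P2 P3 pa pb qa qb -plo ?jdef ?eqxx ?ordeq; nlia.
  + have := costU u3 ag; rewrite !big_cons !big_nil P1 P2 P3 pa pb qa qb -plo ?jdef.
    have h1 := hA (i:=a) (k:=lo) (j:=j) (l:=x) (ltn_trans ab blo) jltx.
    have h2 := hA (i:=b) (k:=lo) (j:=x) (l:=y) blo xy.
    lra.
  + split => //; nlia.
Qed.

Lemma ins_t1 r (a b x y : 'I_n) (p q : {perm 'I_n}) : struct r p q -> Inv r a b x y p q ->
  exists p' q' a' b' x' y', Post r a b x y p q a' b' x' y' p' q' /\ y' = (n - r.+1)%N :> nat.
Proof.
move=> st iv; have iv' := iv.
case: iv' => ab xy /andP[wa wb] /andP[wx wy] [pa pb qa qb H].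
case: (ltnP y (n - r.+1)) => ra; last first.
  exists p, q, a, b, x, y; split; first exact: Post_refl.
  by move: wy; rewrite /inW; nlia.
have rn : (r < n)%N by move: wa; rewrite /inW; nlia.
have [lo vj] : {lo : 'I_n | nat_of_ord (p lo) = (n - r.+1)%N} :=
  exist _ ((p^-1)%g (rev_ord (Ordinal rn))) (congr1 val (permKV p (rev_ord (Ordinal rn)))).
have wj : inW r (p lo) by move: wx; rewrite /inW vj; nlia.
have wlo : inW r lo.
  apply/negPn/negP => nw; have [e _] := st _ nw.
  by move: wj; rewrite e (negbTE nw).
have plo : p lo = q lo.
  apply/eqP; apply: contraT => ne; have := H _ wlo ne.
  by move: ra; rewrite vj; nlia.
have [j jdef] : {j : 'I_n | p lo = j} := exist _ (p lo) erefl.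
rewrite jdef in vj wj.
have yltj : (y < j)%N by rewrite vj.
have xltj : (x < j)%N by nlia.
case: (ltngtP lo a) => [loa | alo | /val_inj e]; last (by move: xltj; rewrite -jdef e pa; nlia).
-
  have u3 : uniq [:: lo; b; a] by rewrite /= !inE !ordeq; nlia.
  have w3 : all (inW r) [:: lo; b; a] by rewrite /= wlo wa wb.
  have hlo3 : forall i : 'I_n, i \in [:: lo; b; a] -> [\/ i = lo, i = b | i = a].
    by move=> i; rewrite !inE => /or3P[/eqP|/eqP|/eqP]; [constructor 1|constructor 2|constructor 3].
  pose p' := cyc lo b a p.
  have [P1 P2 P3 P4] := cycE p u3.
  have ag : agree [:: lo; b; a] p q p' q by move=> i /P4 ->.
  exists p', q, lo, b, x, j; split; last by [].
  split.
  + exact: struct_agree st w3 ag.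
  + apply: (Inv_move iv ag) => //; try nlia; try by rewrite ?P1 ?P2 ?P3 ?pa ?pb ?qa ?qb -?plo ?jdef ?wlo ?wa ?wb ?wx ?wy ?wj.
    move=> i /hlo3 [->|->|->] _; rewrite ?P1 ?P2 ?P3 ?qa ?qb -?plo ?jdef ?pa ?pb ?eqxx ?ordeq /=; nlia.
  + have := commU u3 ag; rewrite !big_cons !big_nil P1 P2 P3 pa pb qa qb -plo ?jdef ?eqxx ?ordeq; nlia.
  + have := costU u3 ag; rewrite !big_cons !big_nil P1 P2 P3 pa pb qa qb -plo ?jdef.
    have h1 := hA (i:=lo) (k:=a) (j:=x) (l:=j) loa xltj.
    have h2 := hA (i:=a) (k:=b) (j:=y) (l:=j) ab yltj.
    lra.
  + split => //; nlia.
case: (ltngtP lo b) => [lob | blo | /val_inj e]; last (by move: yltj; rewrite -jdef e pb; nlia).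
-
  have u3 : uniq [:: a; lo; b] by rewrite /= !inE !ordeq; nlia.
  have w3 : all (inW r) [:: a; lo; b] by rewrite /= wlo wa wb.
  have bn : b \notin [:: a; lo] by rewrite !inE !ordeq; nlia.
  have an : a \notin [:: lo; b] by rewrite !inE !ordeq; nlia.
  pose p' := swp lo b p; pose q' := swp a lo q.
  have [P1 P2 P3] := swpE lo b p; have [Q1 Q2 Q3] := swpE a lo q.
  have ag : agree [:: a; lo; b] p q p' q'.
    move=> i; rewrite !inE !negb_or => /and3P[h1 h2 h3].
    by rewrite P3 ?Q3 // !inE negb_or ?h1 ?h2 ?h3.
  exists p', q', a, b, x, j; split; last by [].
  split.
  + exact: struct_agree st w3 ag.
  + apply: (Inv_move iv ag) => //; try nlia; try by rewrite ?P1 ?P2 ?(P3 _ an) ?Q1 ?Q2 ?(Q3 _ bn) ?pa ?pb ?qa ?qb -?plo ?jdef ?wj ?wx ?wy ?wa ?wb.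
    move=> i; rewrite !inE => /or3P[/eqP->|/eqP->|/eqP->] _.
    * by rewrite (P3 _ an) Q1 pa -plo ?jdef ?ordeq; nlia.
    * by rewrite P1 Q2 pb qa eqxx.
    * by rewrite P2 (Q3 _ bn) qb ?jdef ?ordeq; nlia.
  + have := commU u3 ag; rewrite !big_cons !big_nil P1 P2 (P3 _ an) Q1 Q2 (Q3 _ bn) pa pb qa qb -plo ?jdef ?eqxx ?ordeq; nlia.
  + have := costU u3 ag; rewrite !big_cons !big_nil P1 P2 (P3 _ an) Q1 Q2 (Q3 _ bn) pa pb qa qb -plo ?jdef.
    have h1 := hA (i:=lo) (k:=b) (j:=y) (l:=j) lob yltj.
    have h2 := hB (i:=a) (k:=lo) (j:=y) (l:=j) alo yltj.
    lra.
  + split => //; nlia.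
-
  have u3 : uniq [:: a; b; lo] by rewrite /= !inE !ordeq; nlia.
  have w3 : all (inW r) [:: a; b; lo] by rewrite /= wlo wa wb.
  have hlo3 : forall i : 'I_n, i \in [:: a; b; lo] -> [\/ i = a, i = b | i = lo].
    by move=> i; rewrite !inE => /or3P[/eqP|/eqP|/eqP]; [constructor 1|constructor 2|constructor 3].
  pose q' := cyc a b lo q.
  have [Q1 Q2 Q3 Q4] := cycE q u3.
  have ag : agree [:: a; b; lo] p q p q' by move=> i /Q4 ->.
  exists p, q', a, lo, x, j; split; last by [].
  split.
  + exact: struct_agree st w3 ag.
  + apply: (Inv_move iv ag) => //; try nlia; try by rewrite ?Q1 ?Q2 ?Q3 ?pa ?pb ?qa ?qb -?plo ?jdef ?wlo ?wa ?wb ?wx ?wy ?wj.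
    move=> i /hlo3 [->|->|->] _; rewrite ?Q1 ?Q2 ?Q3 ?qa ?qb -?plo ?jdef ?pa ?pb ?eqxx ?ordeq /=; nlia.
  + have := commU u3 ag; rewrite !big_cons !big_nil Q1 Q2 Q3 pa pb qa qb -plo ?jdef ?eqxx ?ordeq; nlia.
  + have := costU u3 ag; rewrite !big_cons !big_nil Q1 Q2 Q3 pa pb qa qb -plo ?jdef.
    have h1 := hB (i:=a) (k:=b) (j:=y) (l:=j) ab yltj.
    have h2 := hB (i:=b) (k:=lo) (j:=x) (l:=j) blo xltj.
    lra.
  + split => //; nlia.
Qed.


Lemma cross_lt (u v a b : nat) : (u < v -> b < a -> u * a + v * b < u * b + v * a)%N.
Proof.
move=> uv ba.
have -> : (u * b + v * a = u * a + v * b + (v - u) * (a - b))%N.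
  rewrite mulnBl !mulnBr. nia.
have : (0 < (v - u) * (a - b))%N by rewrite muln_gt0 !subn_gt0 uv ba.
lia.
Qed.

Lemma win_edge r m : ~~ ((r.+1 <= m) && (m < n - r.+1))%N -> ((r <= m) && (m < n - r))%N ->
  m = r \/ m = (n - r.+1)%N.
Proof. lia. Qed.

Lemma finish r (a b x y : 'I_n) (p q : {perm 'I_n}) : struct r p q -> Inv r a b x y p q ->
  exists p' q', [/\ struct r.+1 p' q', comm p' q' = comm p q & cost p' q' <= cost p q].
Proof.
move=> st iv.
have [p1 [q1 [a1 [b1 [x1 [y1 [[st1 iv1 c1 k1 [m1 m2 m3 m4]] e1]]]]]]] := ins_s0 st iv.
have [p2 [q2 [a2 [b2 [x2 [y2 [[st2 iv2 c2 k2 [n1 n2 n3 n4]] e2]]]]]]] := ins_s1 st1 iv1.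
have [p3 [q3 [a3 [b3 [x3 [y3 [[st3 iv3 c3 k3 [o1 o2 o3 o4]] e3]]]]]]] := ins_t0 st2 iv2.
have [p4 [q4 [a4 [b4 [x4 [y4 [[st4 iv4 c4 k4 [l1 l2 l3 l4]] e4]]]]]]] := ins_t1 st3 iv3.
exists p4, q4; split.
- case: iv4 => ab xy /andP[wa wb] /andP[wx wy] [pa pb qa qb _].
  move: wa wb wx wy; rewrite /inW => wa wb wx wy.
  have ea : nat_of_ord a4 = r by nlia.
  have eb : nat_of_ord b4 = (n - r.+1)%N by nlia.
  have ex : nat_of_ord x4 = r by nlia.
  have ey : nat_of_ord y4 = (n - r.+1)%N by nlia.
  move=> i ni; case: (boolP (inW r i)) => wi; last exact: st4 i wi.
  move: ni wi; rewrite /inW => ni wi.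
  have [ir|ir] := win_edge ni wi.
  + have ia : i = a4 by apply: val_inj; rewrite /= ir ea.
    rewrite ia pa qa; split; apply: val_inj; rewrite /= ?ex ?ey ?ea //.
  + have ib : i = b4 by apply: val_inj; rewrite /= ir eb.
    rewrite ib pb qb; split; apply: val_inj; rewrite /= ?ex ?ey ?eb //; nlia.
- by rewrite c4 c3 c2 c1.
- exact: le_trans k4 (le_trans k3 (le_trans k2 k1)).
Qed.

Lemma swapP r (p q : {perm 'I_n}) (u v : 'I_n) : struct r p q -> inW r u -> inW r v ->
  (u < v)%N -> (p v < p u)%N -> p u != q u -> p v != q v ->
  [/\ struct r (swp u v p) q, (comm p q <= comm (swp u v p) q)%N,
      cost (swp u v p) q <= cost p q & (phi p q < phi (swp u v p) q)%N].
Proof.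
move=> st wu wv uv puv nu nv.
have [P1 P2 P3] := swpE u v p.
have u2 : uniq [:: u; v] by rewrite /= inE ordeq; nlia.
have ag : agree [:: u; v] p q (swp u v p) q by move=> i hi; rewrite P3.
split.
- by apply: struct_agree st _ ag; rewrite /= wu wv.
- have := commU u2 ag; rewrite !big_cons !big_nil (negbTE nu) (negbTE nv); nlia.
- have := costU u2 ag; rewrite !big_cons !big_nil P1 P2.
  have h := hA (i:=u) (k:=v) (j:=p v) (l:=p u) uv puv; lra.
- have h := cross_lt uv puv.
  have := phiU u2 ag; rewrite !big_cons !big_nil P1 P2; clean.
  set a1 := nat_of_ord (p u) in h *; set a2 := nat_of_ord (p v) in h *; lia.
Qed.

Lemma swapQ r (p q : {perm 'I_n}) (u v : 'I_n) : struct r p q -> inW r u -> inW r v ->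
  (u < v)%N -> (q u < q v)%N -> p u != q u -> p v != q v ->
  [/\ struct r p (swp u v q), (comm p q <= comm p (swp u v q))%N,
      cost p (swp u v q) <= cost p q & (phi p q < phi p (swp u v q))%N].
Proof.
move=> st wu wv uv quv nu nv.
have [Q1 Q2 Q3] := swpE u v q.
have u2 : uniq [:: u; v] by rewrite /= inE ordeq; nlia.
have ag : agree [:: u; v] p q p (swp u v q) by move=> i hi; rewrite Q3.
split.
- by apply: struct_agree st _ ag; rewrite /= wu wv.
- have := commU u2 ag; rewrite !big_cons !big_nil (negbTE nu) (negbTE nv); nlia.
- have := costU u2 ag; rewrite !big_cons !big_nil Q1 Q2.
  have h := hB (i:=u) (k:=v) (j:=q u) (l:=q v) uv quv; lra.
- have e1 : (nat_of_ord (rev_ord (q v)) < nat_of_ord (rev_ord (q u)))%N.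
    rewrite /=; have := ltn_ord (q u); have := ltn_ord (q v); clean; lia.
  have h := cross_lt uv e1.
  have := phiU u2 ag; rewrite !big_cons !big_nil Q1 Q2; clean.
  set a1 := nat_of_ord (rev_ord (q u)) in h *; set a2 := nat_of_ord (rev_ord (q v)) in h *; lia.
Qed.

End Main.


Section Main2.
Variables (R : realFieldType) (n : nat) (A B : 'M[R]_n).
Hypotheses (hA : monge A) (hB : anti_monge B).

Ltac clean2 := repeat match goal with
 | H : is_true (inW _ _) |- _ => clear H
 | H : is_true (uniq _) |- _ => clear H
 | H : is_true (all _ _) |- _ => clear H
 | H : is_true (_ \notin _) |- _ => clear H
 | H : Inv _ _ _ _ _ _ _ |- _ => clear H
 | H : struct _ _ _ |- _ => clear H
 | H : forall _, _ |- _ => clear H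
 | H : is_true (~~ _) |- _ => clear H
 | H : monge _ |- _ => clear H
 | H : anti_monge _ |- _ => clear H
 end.
Ltac nlia2 := clean2; lia.

Lemma preQ r (p q : {perm 'I_n}) i : struct r p q -> inW r i -> p i != q i ->
  exists i', inW r i' && (p i' != q i') /\ p i' = q i.
Proof.
move=> st wi ne; pose i' := (p^-1)%g (q i); exists i'.
have e : p i' = q i by rewrite /i' permKV.
split=> //; apply/andP; split.
  apply/negPn/negP => nw; have [e2 _] := st _ nw.
  by move: (winQ st wi); rewrite -e e2 (negbTE nw).
apply/eqP => e2.
have ei : i' = i by apply: (perm_inj (s:=q)); rewrite -e2 e.
by move: ne; rewrite -ei e2 eqxx.
Qed.

Lemma preP r (p q : {perm 'I_n}) i : struct r p q -> inW r i -> p i != q i ->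
  exists i', inW r i' && (p i' != q i') /\ q i' = p i.
Proof.
move=> st wi ne; pose i' := (q^-1)%g (p i); exists i'.
have e : q i' = p i by rewrite /i' permKV.
split=> //; apply/andP; split.
  apply/negPn/negP => nw; have [_ e2] := st _ nw.
  move: (winP st wi); rewrite -e e2 inW_rev; by rewrite (negbTE nw).
apply/eqP => e2.
have ei : i' = i by apply: (perm_inj (s:=p)); rewrite e2 e.
by move: ne; rewrite -ei e2 eqxx.
Qed.


Lemma norm r (p q : {perm 'I_n}) : struct r p q -> (exists d, inW r d && (p d != q d)) ->
  (exists a b x y, Inv r a b x y p q) \/
  exists p' q', [/\ struct r p' q', (comm p q <= comm p' q')%N,
     cost A B p' q' <= cost A B p q & (phi p q < phi p' q')%N].
Proof.
move=> st [d Pd].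
pose P := [pred i : 'I_n | inW r i && (p i != q i)].
have Pd' : P d := Pd.
case: (@arg_minnP _ d P (fun i => nat_of_ord i) Pd') => a Pa amin.
case: (@arg_maxnP _ d P (fun i => nat_of_ord i) Pd') => b Pb bmax.
case: (@arg_minnP _ d P (fun i => nat_of_ord (p i)) Pd') => i1 Pi1 xmin.
case: (@arg_maxnP _ d P (fun i => nat_of_ord (p i)) Pd') => i2 Pi2 ymax.
have bmax' : forall j, P j -> (nat_of_ord j <= b)%N := bmax.
have ymax' : forall j, P j -> (nat_of_ord (p j) <= p i2)%N := ymax.
clear bmax ymax; rename bmax' into bmax; rename ymax' into ymax.
have qbd : forall i, P i -> (p i1 <= q i <= p i2)%N.
  move=> i /andP[wi ne]; have [i' [Pi' e]] := preQ st wi ne.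
  by rewrite -e; apply/andP; split; [exact: xmin | exact: ymax].
have [i3 [Pi3 qi3]] : exists i', P i' /\ q i' = p i2.
  by case/andP: Pi2 => w ne; have [i' [h e]] := preP st w ne; exists i'.
have [i4 [Pi4 qi4]] : exists i', P i' /\ q i' = p i1.
  by case/andP: Pi1 => w ne; have [i' [h e]] := preP st w ne; exists i'.
have PW : forall i, P i -> inW r i by move=> i /andP[].
have PN : forall i, P i -> p i != q i by move=> i /andP[].
case: (eqVneq a i1) => [ai1|ai1]; last first.
  right; exists (swp a i1 p), q; apply: swapP => //; try exact: PW; try exact: PN.
  - by rewrite ltn_neqAle -ordeq ai1 amin.
  - rewrite ltn_neqAle -ordeq xmin // andbT.
    by apply/eqP => /perm_inj e; move: ai1; rewrite e eqxx.
case: (eqVneq b i2) => [bi2|bi2]; last first.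
  right; exists (swp i2 b p), q; apply: swapP => //; try exact: PW; try exact: PN.
  - by rewrite ltn_neqAle -ordeq eq_sym bi2 bmax.
  - rewrite ltn_neqAle -ordeq (ymax b Pb) andbT.
    by apply/eqP => /perm_inj e; move: bi2; rewrite e eqxx.
case: (eqVneq a i3) => [ai3|ai3]; last first.
  right; exists p, (swp a i3 q); apply: swapQ => //; try exact: PW; try exact: PN.
  - by rewrite ltn_neqAle -ordeq ai3 amin.
  - rewrite ltn_neqAle -ordeq qi3.
    case/andP: (qbd a Pa) => _ ->; rewrite andbT.
    by rewrite -qi3; apply/eqP => /perm_inj e; move: ai3; rewrite e eqxx.
case: (eqVneq b i4) => [bi4|bi4]; last first.
  right; exists p, (swp i4 b q); apply: swapQ => //; try exact: PW; try exact: PN.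
  - by rewrite ltn_neqAle -ordeq eq_sym bi4 bmax.
  - rewrite ltn_neqAle -ordeq qi4.
    case/andP: (qbd b Pb) => -> _; rewrite andbT.
    by rewrite -qi4; apply/eqP => /perm_inj e; move: bi4; rewrite e eqxx.
left; subst i1 i2 i3 i4.
have nab : p a != p b by rewrite -qi3 (PN _ Pa).
have ab : (a < b)%N.
  rewrite ltn_neqAle amin // andbT -ordeq; apply: contraNneq nab => ->; by [].
exists a, b, (p a), (p b); split => //.
- by rewrite ltn_neqAle -ordeq nab xmin.
- by rewrite (PW _ Pa) (PW _ Pb).
- by rewrite (winP st (PW _ Pa)) (winP st (PW _ Pb)).
split => // i wi ne.
have Pi : P i by rewrite /= wi ne.
by rewrite amin // bmax // xmin // ymax // qbd.
Qed.

End Main2.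


Lemma sum_range (N a b : nat) :
  (\sum_(i < N) ((a <= i) && (i < b) : nat) = minn N b - minn N a)%N.
Proof.
elim: N => [|N IH]; first by rewrite big_ord0 !min0n.
rewrite big_ord_recr /= IH; lia.
Qed.

Section Main3.
Variables (R : realFieldType) (n : nat) (A B : 'M[R]_n).
Hypotheses (hA : monge A) (hB : anti_monge B).

Ltac clean3 := repeat match goal with
 | H : is_true (inW _ _) |- _ => clear H
 | H : is_true (uniq _) |- _ => clear H
 | H : is_true (all _ _) |- _ => clear H
 | H : is_true (_ \notin _) |- _ => clear H
 | H : Inv _ _ _ _ _ _ _ |- _ => clear H
 | H : struct _ _ _ |- _ => clear H
 | H : forall _, _ |- _ => clear H
 | H : is_true (~~ _) |- _ => clear H
 | H : monge _ |- _ => clear H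
 | H : anti_monge _ |- _ => clear H
 end.
Ltac nlia3 := clean3; lia.

Lemma card_win r : (2 * r <= n)%N -> (\sum_(i : 'I_n) (inW r i : nat))%N = (n - 2 * r)%N.
Proof.
move=> h; rewrite /inW.
have -> := sum_range n r (n - r); lia.
Qed.

Lemma out_noncomm r (i : 'I_n) : (2 * r < n)%N -> ~~ inW r i -> (i == rev_ord i) = false.
Proof.
move=> h; rewrite /inW ordeq /= => ni; have := ltn_ord i.
move: (nat_of_ord i) ni => m ni hm; apply/eqP; lia.
Qed.

Lemma comm_all r (p q : {perm 'I_n}) : (2 * r < n)%N -> struct r p q ->
  (forall i, inW r i -> p i = q i) -> comm p q = (n - 2 * r)%N.
Proof.
move=> h st al; rewrite /comm -card_win; last by lia.
apply: eq_bigr => i _; case: (boolP (inW r i)) => wi; first by rewrite al ?eqxx.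
by have [-> ->] := st i wi; rewrite (out_noncomm h wi).
Qed.

Lemma phi_bnd (p q : {perm 'I_n}) : (phi p q <= n * (n * n + n * n))%N.
Proof.
have H : forall i : 'I_n, (nat_of_ord i * p i + nat_of_ord i * rev_ord (q i) <= n * n + n * n)%N.
  by move=> i; apply: leq_add; apply: leq_mul; apply: ltnW.
apply: (@leq_trans (\sum_(i : 'I_n) (n * n + n * n))%N).
  by rewrite /phi; apply: leq_sum => i _; exact: H.
by rewrite sum_nat_const card_ord.
Qed.

Lemma grow r (p q : {perm 'I_n}) : (2 * r.+1 <= n)%N -> struct r p q ->
  (forall i, inW r i -> p i = q i) ->
  exists p' q' a b x y, [/\ struct r p' q', Inv r a b x y p' q',
    (comm p' q' + 2 = comm p q)%N & cost A B p' q' <= cost A B p q].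
Proof.
move=> h st al.
have rn : (r < n)%N by lia.
have [lo vlo] : {lo : 'I_n | nat_of_ord lo = r} := exist _ (Ordinal rn) erefl.
have [hi vhi] : {hi : 'I_n | nat_of_ord hi = (n - r.+1)%N} := exist _ (rev_ord (Ordinal rn)) erefl.
have lohi : (lo < hi)%N by rewrite vlo vhi; lia.
have wlo : inW r lo by rewrite /inW vlo; lia.
have whi : inW r hi by rewrite /inW vhi; lia.
have plo := al _ wlo; have phi' := al _ whi.
have [j0 e0] : {j : 'I_n | p lo = j} := exist _ (p lo) erefl.
have [j1 e1] : {j : 'I_n | p hi = j} := exist _ (p hi) erefl.
have wj0 : inW r j0 by rewrite -e0; apply: winP st wlo.
have wj1 : inW r j1 by rewrite -e1; apply: winP st whi.
have ne : j0 != j1.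
  rewrite -e0 -e1; apply/eqP => /perm_inj e; move: lohi; rewrite e; lia.
have u2 : uniq [:: lo; hi] by rewrite /= inE ordeq; lia.
have w2 : all (inW r) [:: lo; hi] by rewrite /= wlo whi.
have hs : forall i : 'I_n, i \notin [:: lo; hi] -> inW r i -> p i = q i by move=> i _; apply: al.
have bnd : forall i : 'I_n, inW r i -> (lo <= i <= hi)%N by move=> i; rewrite /inW vlo vhi; lia.
case: (ltngtP j0 j1) => [lt01 | lt10 | /val_inj e]; last by move: ne; rewrite e eqxx.
- have [Q1 Q2 Q3] := swpE lo hi q.
  have ag : agree [:: lo; hi] p q p (swp lo hi q) by move=> i hi'; rewrite Q3.
  exists p, (swp lo hi q), lo, hi, j0, j1; split.
  + exact: struct_agree st w2 ag.
  + split => //; rewrite ?wlo ?whi ?wj0 ?wj1 //.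
    split; rewrite ?Q1 ?Q2 -?plo -?phi' //.
    move=> i wi; case: (boolP (i \in [:: lo; hi])) => [|nin].
      rewrite !inE => /orP[/eqP->|/eqP->]; rewrite ?Q1 ?Q2 -?plo -?phi' ?e0 ?e1 => _;
      rewrite bnd //=; nlia3.
    by rewrite Q3 // hs ?eqxx.
  + have := commU u2 ag; rewrite !big_cons !big_nil Q1 Q2 -plo -phi' e0 e1 !eqxx (negbTE ne) eq_sym (negbTE ne).
    lia.
  + have := costU A B u2 ag; rewrite !big_cons !big_nil Q1 Q2 -plo -phi' e0 e1.
    have hh := hB (i:=lo) (k:=hi) (j:=j0) (l:=j1) lohi lt01; lra.
- have [P1 P2 P3] := swpE lo hi p.
  have ag : agree [:: lo; hi] p q (swp lo hi p) q by move=> i hi'; rewrite P3.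
  exists (swp lo hi p), q, lo, hi, j1, j0; split.
  + exact: struct_agree st w2 ag.
  + split => //; rewrite ?wlo ?whi ?wj0 ?wj1 //.
    split; rewrite ?P1 ?P2 -?plo -?phi' //.
    move=> i wi; case: (boolP (i \in [:: lo; hi])) => [|nin].
      rewrite !inE => /orP[/eqP->|/eqP->]; rewrite ?P1 ?P2 -?plo -?phi' ?e0 ?e1 => _;
      rewrite bnd //=; nlia3.
    by rewrite P3 // hs ?eqxx.
  + have := commU u2 ag; rewrite !big_cons !big_nil P1 P2 -plo -phi' e0 e1 !eqxx (negbTE ne) eq_sym (negbTE ne).
    lia.
  + have := costU A B u2 ag; rewrite !big_cons !big_nil P1 P2 -plo -phi' e0 e1.
    have hh := hA (i:=lo) (k:=hi) (j:=j1) (l:=j0) lohi lt10; lra.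
Qed.


Lemma step k r : (2 * r.+1 <= n - k)%N -> forall p q : {perm 'I_n}, struct r p q ->
  (k <= comm p q)%N ->
  exists p' q', [/\ struct r.+1 p' q', (k <= comm p' q')%N & cost A B p' q' <= cost A B p q].
Proof.
move=> hr.
suff H : forall N (p q : {perm 'I_n}), (n * (n * n + n * n) - phi p q < N)%N ->
    struct r p q -> (k <= comm p q)%N ->
    exists p' q', [/\ struct r.+1 p' q', (k <= comm p' q')%N & cost A B p' q' <= cost A B p q].
  by move=> p q; apply: (H (n * (n * n + n * n)).+1); rewrite ltnS leq_subr.
elim=> [//|N IH] p q hN st kc.
case: (boolP [exists i, inW r i && (p i != q i)]) => [/existsP ex | nex].
- case: (norm hA hB st ex) => [[a [b [x [y iv]]]] | [p' [q' [st' c' k' ph]]]].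
  + have [p'' [q'' [st'' c'' k'']]] := finish hA hB st iv.
    by exists p'', q''; split => //; rewrite c''.
  + have hb := phi_bnd p' q'.
    have [p3 [q3 [st3 c3 k3]]] := IH p' q' ltac:(lia) st' (leq_trans kc c').
    by exists p3, q3; split => //; exact: le_trans k3 k'.
- have al : forall i, inW r i -> p i = q i.
    move=> i wi; apply/eqP; move/existsPn: nex => /(_ i); by rewrite wi /= negbK.
  have [p' [q' [a [b [x [y [st' iv' c' k']]]]]]] := grow (ltac:(lia) : (2 * r.+1 <= n)%N) st al.
  have [p'' [q'' [st'' c'' k'']]] := finish hA hB st' iv'.
  exists p'', q''; split => //; last exact: le_trans k'' k'.
  rewrite c''; move: c'; rewrite (comm_all _ st al); lia.
Qed.

Lemma reach k r : (2 * r <= n - k)%N -> forall p q : {perm 'I_n}, (k <= comm p q)%N ->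
  exists p' q', [/\ struct r p' q', (k <= comm p' q')%N & cost A B p' q' <= cost A B p q].
Proof.
elim: r => [|r IH] hr p q kc.
  by exists p, q; split => // i; rewrite /inW subn0 ltn_ord leq0n.
have [p1 [q1 [st1 k1 c1]]] := IH ltac:(lia) p q kc.
have [p2 [q2 [st2 k2 c2]]] := step hr st1 k1.
by exists p2, q2; split => //; exact: le_trans c2 c1.
Qed.

Lemma sum_eqd (d : 'I_n) : (\sum_(i : 'I_n) ((i == d) : nat) = 1)%N.
Proof.
rewrite (bigD1 d) //= eqxx big1 // => i /negbTE -> //.
Qed.

Lemma main_perm k (p q : {perm 'I_n}) : (k <= n)%N -> (k <= comm p q)%N ->
  exists p' q', [/\ struct ((n - k) %/ 2) p' q',
     (forall i, inW ((n - k) %/ 2) i -> p' i = q' i) & cost A B p' q' <= cost A B p q].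
Proof.
move=> kn kc; set m := ((n - k) %/ 2)%N.
have hm : (2 * m <= n - k)%N by rewrite /m; lia.
have hm2 : (n - k <= 2 * m + 1)%N by rewrite /m; lia.
have [p' [q' [st k' c']]] := reach hm kc.
exists p', q'; split => // d wd; apply/eqP; apply: contraT => nd.
have [d' [/andP[wd' nd'] e]] := preQ st wd nd.
have dd : d' != d by apply: contraNneq nd => ed; rewrite -e ed.
have hnm : (2 * m < n)%N by move: wd; rewrite /inW; lia.
have pt : forall i, (inW m i : nat) =
    ((inW m i && (i != d) && (i != d')) + (i == d) + (i == d'))%N.
  move=> i; case: (eqVneq i d) => [->|id]; first by rewrite wd eq_sym (negbTE dd).
  case: (eqVneq i d') => [->|id'] /=; first by rewrite wd' andbT.
  by case: (inW m i).
have hsum : (\sum_(i : 'I_n) (inW m i : nat) =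
    \sum_(i : 'I_n) ((inW m i && (i != d) && (i != d')) : nat) + 2)%N.
  rewrite (eq_bigr _ (fun i _ => pt i)) !big_split /= !sum_eqd; lia.
have hle : (comm p' q' <= \sum_(i : 'I_n) ((inW m i && (i != d) && (i != d')) : nat))%N.
  rewrite /comm; apply: leq_sum => i _.
  case: (eqVneq (p' i) (q' i)) => [ei|]; last by [].
  case: (boolP (inW m i)) => wi; last first.
    by have [e1 e2] := st i wi; move/eqP: ei; rewrite e1 e2 (out_noncomm hnm wi).
  case: (eqVneq i d) => [ed|]; first by move: nd; rewrite -ed ei eqxx.
  case: (eqVneq i d') => [ed'|] //; by move: nd'; rewrite -ed' ei eqxx.
move: hsum hle; rewrite card_win; last by lia.
lia.
Qed.

End Main3.


Section Sets.
Variable n : nat.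

Definition graphS (S : {set 'I_n}) (p : {perm 'I_n}) : {set 'I_n * 'I_n} :=
  [set (i, p i) | i in S].

Lemma mem_graphS (S : {set 'I_n}) (p : {perm 'I_n}) i j : ((i, j) \in graphS S p) = (i \in S) && (p i == j).
Proof.
apply/imsetP/andP => [[i' Si' [-> ->]] // | [Si /eqP <-]]; by exists i.
Qed.

Lemma is_pm_graphS (S : {set 'I_n}) (p : {perm 'I_n}) : (forall i, i \in S -> p i \in S) ->
  is_pm S (graphS S p).
Proof.
move=> pS; split; [|split].
- apply/subsetP => [[i j]]; rewrite mem_graphS in_setX => /andP[Si /eqP <-].
  by rewrite Si pS.
- move=> i Si; have -> : [set j | (i, j) \in graphS S p] = [set p i].
    by apply/setP => j; rewrite !inE mem_graphS Si eq_sym.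
  exact: cards1.
- move=> j Sj; have -> : [set i | (i, j) \in graphS S p] = [set (p^-1)%g j].
    apply/setP => i; rewrite !inE mem_graphS.
    apply/andP/eqP => [[_ /eqP <-]|->]; first by rewrite permK.
    rewrite permKV eqxx; split => //.
    apply/negPn/negP => nS.
    (* p maps S into S and is injective, so maps complement into complement *)
    have : (p^-1)%g j \in S.
      case: (boolP ((p^-1)%g j \in S)) => // h.
      exfalso.
      have inj : {in S &, injective p} by move=> a b _ _; apply: perm_inj.
      have sub : p @: S \subset S by apply/subsetP => x /imsetP[y yS ->]; exact: pS.
      have eqS : p @: S = S by apply/eqP; rewrite eqEcard sub (card_in_imset inj) leqnn.
      move: Sj; rewrite -eqS => /imsetP[y yS ey].
      by move: h; rewrite ey permK yS.
    by rewrite (negbTE nS).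
  exact: cards1.
Qed.

Lemma pm_of_is_pm (S : {set 'I_n}) M : is_pm S M ->
  exists s : {perm 'I_n}, (forall i, i \notin S -> s i = i) /\ M = graphS S s.
Proof.
case=> sub [rows cols].
have rowP : forall i, i \in S -> exists j, [set j | (i, j) \in M] = [set j].
  by move=> i Si; apply/cards1P; rewrite rows.
have colP : forall j, j \in S -> exists i, [set i | (i, j) \in M] = [set i].
  by move=> j Sj; apply/cards1P; rewrite cols.
pose f i := if i \in S then odflt i [pick j | (i, j) \in M] else i.
have fM : forall i, i \in S -> (i, f i) \in M.
  move=> i Si; rewrite /f Si; case: pickP => [j //|none].
  have [j hj] := rowP i Si.
  by have := set11 j; rewrite -hj inE none.
have fS : forall i, i \in S -> f i \in S.
  by move=> i Si; have := subsetP sub _ (fM i Si); rewrite in_setX => /andP[].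
have fN : forall i, i \notin S -> f i = i by move=> i /negbTE Si; rewrite /f Si.
have finj : injective f.
  move=> i1 i2 e.
  case: (boolP (i1 \in S)) => S1; case: (boolP (i2 \in S)) => S2.
  - have [c hc] := colP _ (fS _ S1).
    have h1 : i1 \in [set i | (i, f i1) \in M] by rewrite inE fM.
    have h2 : i2 \in [set i | (i, f i1) \in M] by rewrite inE e fM.
    by move: h1 h2; rewrite hc !inE => /eqP -> /eqP ->.
  - by move: (fS _ S1); rewrite e fN // (negbTE S2).
  - by move: (fS _ S2); rewrite -e fN // (negbTE S1).
  - by rewrite -(fN _ S1) -(fN _ S2) e.
exists (perm finj); split; first by move=> i nS; rewrite permE fN.
apply/setP => [[i j]]; rewrite mem_graphS permE.
apply/idP/andP => [ij | [Si /eqP <-]]; last exact: fM.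
have Si : i \in S by have := subsetP sub _ ij; rewrite in_setX => /andP[].
split => //; have [c hc] := rowP i Si.
have h1 : j \in [set j | (i, j) \in M] by rewrite inE.
have h2 : f i \in [set j | (i, j) \in M] by rewrite inE fM.
by move: h1 h2; rewrite hc !inE => /eqP -> /eqP ->.
Qed.

Lemma mcost_graphS (R : realFieldType) (C : 'M[R]_n) (S : {set 'I_n}) (p : {perm 'I_n}) :
  mcost C (graphS S p) = \sum_(i in S) C i (p i).
Proof.
rewrite /mcost /graphS big_imset //=.
by move=> a b _ _ [].
Qed.

Lemma card_graphI (p q : {perm 'I_n}) :
  #|graphS setT p :&: graphS setT q| = comm p q.
Proof.
have -> : graphS setT p :&: graphS setT q = graphS [set i | p i == q i] p.
  apply/setP => [[i j]]; rewrite inE !mem_graphS !inE.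
  rewrite /=; case: (p i =P j) => e1; case: (q i =P j) => e2;
    case: (p i =P q i) => e3 //=; congruence.
rewrite /graphS card_in_imset; last by move=> a b _ _ [].
rewrite /comm -sum1_card big_mkcond /=.
by apply: eq_bigr => i _; rewrite inE; case: (p i == q i).
Qed.

End Sets.


Lemma cost_good (R : realFieldType) n (A B : 'M[R]_n) m (p q : {perm 'I_n}) :
  struct m p q -> (forall i, inW m i -> p i = q i) ->
  cost A B p q = \sum_(i | ~~ inW m i) (A i i + B i (rev_ord i)) +
                 \sum_(i in [set i : 'I_n | inW m i]) (A + B) i (p i).
Proof.
move=> st eq; rewrite /cost (bigID (fun i => inW m i)) /= addrC; congr (_ + _).
  by apply: eq_bigr => i wi; have [-> ->] := st i wi.
rewrite [RHS](eq_bigl (fun i => inW m i)); last by move=> i; rewrite inE.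
by apply: eq_bigr => i wi; rewrite mxE eq.
Qed.

Lemma cost_graph (R : realFieldType) n (A B : 'M[R]_n) (p q : {perm 'I_n}) :
  mcost A (graphS setT p) + mcost B (graphS setT q) = cost A B p q.
Proof.
rewrite !mcost_graphS /cost big_split /=; congr (_ + _); apply: eq_bigl => i; exact: in_setT.
Qed.

Theorem theorem6 (R : realFieldType) (n k : nat) (A B : 'M[R]_n) :
  (k <= n)%N -> monge A -> anti_monge B ->
  let m := ((n - k) %/ 2)%N in
  let I := [set i : 'I_n | (i < m)%N || (n - m <= i)%N] in
  let J := [set i : 'I_n | (m <= i)%N && (i < n - m)%N] in
  exists M1 M2 : {set 'I_n * 'I_n},
    [/\ recov_optimal A B k M1 M2,
        (forall i, i \in I -> (i, i) \in M1),
        (forall i, i \in I -> (i, rev_ord i) \in M2) &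
        opt_assignment (A + B) J (M1 :&: M2)].
Proof.
move=> kn hA hB m I J.
have JW : forall i, (i \in J) = inW m i by move=> i; rewrite inE.
have JE : J = [set i : 'I_n | inW m i] by apply/setP => i; rewrite !inE.
have IW : forall i, (i \in I) = ~~ inW m i.
  by move=> i; rewrite !inE /inW; apply/idP/idP; lia.
have hm : (2 * m <= n - k)%N by rewrite /m; lia.
have tinj : injective (fun i : 'I_n => if inW m i then i else rev_ord i).
  move=> i j /=; case: (boolP (inW m i)) => wi; case: (boolP (inW m j)) => wj //.
  - by move=> e; move: wi; rewrite e inW_rev (negbTE wj).
  - by move=> e; move: wj; rewrite -e inW_rev (negbTE wi).
  - exact: rev_ord_inj.
pose tau := perm tinj.
pose good (pq : {perm 'I_n} * {perm 'I_n}) := [forall i, if inW m i then pq.1 i == pq.2 i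
   else (pq.1 i == i) && (pq.2 i == rev_ord i)].
have goodI : forall p q, struct m p q -> (forall i, inW m i -> p i = q i) -> good (p, q).
  move=> p q st eq; apply/forallP => i /=; case: (boolP (inW m i)) => wi.
    by rewrite eq.
  by have [-> ->] := st i wi; rewrite !eqxx.
have goodE : forall p q, good (p, q) -> struct m p q /\ (forall i, inW m i -> p i = q i).
  move=> p q /forallP g; split => i wi.
    by have := g i; rewrite /= (negbTE wi) => /andP[/eqP -> /eqP ->].
  by have := g i; rewrite /= wi => /eqP.
have good0 : good (1%g, tau).
  apply: goodI => [i wi|i wi]; rewrite perm1 permE /=.
    by rewrite (negbTE wi).
  by rewrite wi.
case: (@arg_minP _ _ _ (1%g, tau) good (fun pq => cost A B pq.1 pq.2) good0) => [[ps qs] gs minP].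
have [sts eqs] := goodE _ _ gs.
exists (graphS setT ps), (graphS setT qs).
have hnm : (2 * m <= n)%N by lia.
split.
- have feas : recov_feasible k (graphS setT ps) (graphS setT qs).
    split; [|split].
    + by apply: is_pm_graphS => i; rewrite in_setT.
    + by apply: is_pm_graphS => i; rewrite in_setT.
    + rewrite card_graphI.
      have : (\sum_(i : 'I_n) (inW m i : nat) <= comm ps qs)%N.
        by apply: leq_sum => i _; case: (boolP (inW m i)) => wi //; rewrite eqs ?eqxx.
      rewrite card_win //; move: hm kn; clear; lia.
  split => // N1 N2 [pm1 [pm2 kc]].
  have [p [_ e1]] := pm_of_is_pm pm1; have [q [_ e2]] := pm_of_is_pm pm2.
  rewrite e1 e2 !cost_graph; rewrite e1 e2 card_graphI in kc.
  have [p' [q' [st' eq' c']]] := main_perm hA hB kn kc.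
  apply: le_trans c'.
  exact: (minP (p', q') (goodI _ _ st' eq')).
- by move=> i; rewrite IW => wi; rewrite mem_graphS in_setT /=; have [-> _] := sts i wi.
- by move=> i; rewrite IW => wi; rewrite mem_graphS in_setT /=; have [_ ->] := sts i wi.
have MI : graphS setT ps :&: graphS setT qs = graphS J ps.
  apply/setP => [[i j]]; rewrite inE !mem_graphS !in_setT JW /=.
  case: (boolP (inW m i)) => wi /=; first by rewrite -(eqs i wi) andbb.
  have [-> ->] := sts i wi.
  apply/negbTE/negP => /andP[/eqP e1 /eqP e2].
  have ev := congr1 val (etrans e1 (esym e2)).
  move: wi (ltn_ord i) ev; rewrite /inW /= => wi lt ev; lia.
rewrite MI; split.
  by apply: is_pm_graphS => i; rewrite !JW => wi; exact: winP sts wi.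
move=> M' pmM'; have [s [sfix eM']] := pm_of_is_pm pmM'.
have sJ : forall i, inW m i -> inW m (s i).
  move=> i wi; have := subsetP pmM'.1 (i, s i).
  rewrite eM' mem_graphS JW wi eqxx => /(_ isT); rewrite in_setX => /andP[_].
  by rewrite JW.
have goods : good (s, (s * tau)%g).
  apply: goodI => [i wi|i wi]; rewrite permM permE.
    have si : s i = i by apply: sfix; rewrite JW.
    by rewrite si (negbTE wi).
  by rewrite (sJ i wi).
have := minP _ goods; rewrite /=.
rewrite (cost_good A B sts eqs).
have [st2 eq2] := goodE _ _ goods.
rewrite (cost_good A B st2 eq2) eM' !mcost_graphS JE.
lra.
Qed.
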